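(* Let $\pi\in\mathcal{S}_n$ be a Schröder permutation, and let $\mathcal{E}^*(\pi)$ be the set obtained from $\mathcal{E}(\pi)$ by replacing every element $(i,j)\in\mathcal{E}_1(\pi)$ by $(i-1,j-1)$. Then $\mathcal{E}^*(\pi)$ is a ranked essential set with all ranks equal to $0$: there exists a permutation $\sigma\in\mathcal{S}_n$ with $\mathcal{E}(\sigma)=\mathcal{E}^*(\pi)$ and $\rho_\sigma(i,j)=0$ for every $(i,j)\in\mathcal{E}(\sigma)$; in particular, $\sigma$ avoids $132$.
   Context: A permutation $\pi$ avoids a pattern $\tau\in\mathcal{S}_k$ if no subsequence $\pi_{i_1}\cdots\pi_{i_k}$ ($i_1<\dots<i_k$) is in the same relative order as $\tau$. A Schröder permutation is a permutation avoiding both $1243$ and $2143$. Represent $\pi\in\mathcal{S}_n$ by an $n\times n$ array, rows $i$ numbered top to bottom, columns $j$ left to right, with a dot in square $(i,\pi_i)$. The diagram $D(\pi)$ is the set of squares $(i,j)$ with $\pi_i>j$ and $\pi^{-1}(j)>i$. The essential set $\mathcal{E}(\pi)$ is the set of $(i,j)\in D(\pi)$ with $(i+1,j)\notin D(\pi)$ and $(i,j+1)\notin D(\pi)$ (squares outside the array count as not in $D(\pi)$). The rank (with respect to $\pi$) of a square $(i,j)$ is $\rho_\pi(i,j)=\#\{k<i:\pi_k<j\}$, and $\mathcal{E}_r(\pi)=\{(i,j)\in\mathcal{E}(\pi):\rho_\pi(i,j)=r\}$. *)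

(* Defs.v *)
From mathcomp Require Import all_boot all_fingroup.
Set Implicit Arguments. Unset Strict Implicit. Unset Printing Implicit Defensive.

(* Conventions: a permutation of {1..n} is p : 'S_n acting on 'I_n = {0..n-1};
   rows/columns are 0-based here (row i, column j of the paper correspond to
   i-1, j-1).  Squares are pairs of naturals; squares outside the array are
   never in the diagram. *)

(* value of p at position i (only meaningful for i < n) *)
Definition pval n (p : 'S_n) (i : nat) : nat :=
  if @insub _ (fun k => k < n) 'I_n i is Some k then val (p k) else n.
(* position of the value j, i.e. p^{-1}(j) (only meaningful for j < n) *)
Definition pinv n (p : 'S_n) (j : nat) : nat :=
  if @insub _ (fun k => k < n) 'I_n j is Some k then val ((p^-1)%g k) else n.

Definition diag n (p : 'S_n) (i j : nat) : bool :=
  [&& i < n, j < n, j < pval p i & i < pinv p j].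

Definition ess n (p : 'S_n) (i j : nat) : bool :=
  [&& diag p i j, ~~ diag p i.+1 j & ~~ diag p i j.+1].

Definition rank n (p : 'S_n) (i j : nat) : nat :=
  #|[set k : 'I_n | (k < i) && (p k < j)]|.

Definition ess_star n (p : 'S_n) (i j : nat) : bool :=
  (ess p i j && (rank p i j != 1)) || (ess p i.+1 j.+1 && (rank p i.+1 j.+1 == 1)).

Definition avoids n (p : 'S_n) (t : seq nat) : Prop :=
  ~ exists f : 'I_(size t) -> 'I_n,
      (forall a b : 'I_(size t), a < b -> f a < f b) /\
      (forall a b : 'I_(size t), (p (f a) < p (f b)) = (nth 0 t a < nth 0 t b)).

Definition schroder n (p : 'S_n) : Prop :=
  avoids p [:: 1; 2; 4; 3] /\ avoids p [:: 2; 1; 4; 3].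

(* Main.v *)
Require Import Defs.
From mathcomp Require Import all_boot all_fingroup.
From mathcomp Require Import zify.
Import Defs.
Set Implicit Arguments. Unset Strict Implicit. Unset Printing Implicit Defensive.

Section Basics.
Variables (n : nat) (p : 'S_n).
Local Notation P := (pval p).
Local Notation Q := (pinv p).

Lemma pvalE i (h : i < n) : P i = p (Ordinal h).
Proof. by rewrite /pval insubT. Qed.
Lemma pinvE j (h : j < n) : Q j = (p^-1)%g (Ordinal h).
Proof. by rewrite /pinv insubT. Qed.
Lemma pvalO (k : 'I_n) : P k = p k.
Proof. by rewrite (pvalE (ltn_ord k)); congr (val (p _)); apply: val_inj. Qed.
Lemma pval_ge i : n <= i -> P i = n.
Proof. by move=> h; rewrite /pval insubF // ltnNge h. Qed.
Lemma pval_lt i : i < n -> P i < n.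
Proof. by move=> h; rewrite (pvalE h). Qed.
Lemma pinv_lt j : j < n -> Q j < n.
Proof. by move=> h; rewrite (pinvE h). Qed.
Lemma pinvK i : i < n -> Q (P i) = i.
Proof.
move=> h; rewrite (pvalE h) (pinvE (ltn_ord _)).
have -> : Ordinal (ltn_ord (p (Ordinal h))) = p (Ordinal h) by apply: val_inj.
by rewrite permK.
Qed.
Lemma pvalK j : j < n -> P (Q j) = j.
Proof.
move=> h; rewrite (pinvE h) (pvalE (ltn_ord _)).
have -> : Ordinal (ltn_ord ((p^-1)%g (Ordinal h))) = (p^-1)%g (Ordinal h) by apply: val_inj.
by rewrite permKV.
Qed.
Lemma pval_inj i i' : i < n -> i' < n -> P i = P i' -> i = i'.
Proof. by move=> h h' e; rewrite -(pinvK h) -(pinvK h') e. Qed.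

Definition Z i j := forall k, k < i -> k < n -> j <= P k.

Lemma rank0P i j : rank p i j = 0 <-> Z i j.
Proof.
split.
- move=> /card0_eq h k ki kn; move: (h (Ordinal kn)); rewrite !inE /= ki /= (pvalE kn).
  by move/negbT; rewrite -leqNgt.
- move=> h; apply: eq_card0 => k; rewrite !inE; apply/negbTE.
  apply/negP => /andP[ki]; have := h k ki (ltn_ord k); rewrite (pvalE (ltn_ord k)).
  have -> : Ordinal (ltn_ord k) = k by apply: val_inj.
  by rewrite leqNgt => /negbTE ->.
Qed.

Lemma rank_le1 i j :
  (forall k1 k2, k1 < i -> k2 < i -> k1 < n -> k2 < n -> P k1 < j -> P k2 < j -> k1 = k2) ->
  rank p i j <= 1.
Proof.
move=> h; apply/card_le1_eqP => x y; rewrite !inE => /andP[xi xj] /andP[yi yj].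
by apply: val_inj; apply: h => //; rewrite ?pvalO ?ltn_ord.
Qed.

End Basics.


Section Sch.
Variables (n : nat) (p : 'S_n).
Local Notation P := (pval p).
Local Notation Q := (pinv p).

Lemma pat4 (t : seq nat) (Ht : size t = 4) (o1 o2 o3 o4 : 'I_n) :
  o1 < o2 -> o2 < o3 -> o3 < o4 ->
  (forall a b : 'I_4, (p (nth o1 [:: o1; o2; o3; o4] a) < p (nth o1 [:: o1; o2; o3; o4] b)) = (nth 0 t a < nth 0 t b)) ->
  ~ avoids p t.
Proof.
move=> h12 h23 h34 hv; apply; move: hv; rewrite -Ht => hv.
exists (fun a => nth o1 [:: o1; o2; o3; o4] a); split; last by [].
move=> [a ha] [b hb] /=; rewrite Ht in ha hb *.
case: a ha => [|[|[|[|a]]]] ha //; case: b hb => [|[|[|[|b]]]] hb //= _; lia.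
Qed.

Lemma sch_uniq i j k1 k2 : schroder p -> diag p i j -> k1 < i -> k2 < i ->
  P k1 < j -> P k2 < j -> k1 = k2.
Proof.
move=> [A1 A2] /and4P[iN jN jP iQ].
wlog lt12 : k1 k2 / k1 <= k2.
  move=> W h1 h2 h3 h4; case: (leqP k1 k2) => h; first exact: W.
  by symmetry; apply: W => //; apply: ltnW.
move=> h1 h2 h3 h4; have [->//|ne12] := eqVneq k1 k2.
have lt12' : k1 < k2 by rewrite ltn_neqAle ne12.
exfalso.
have k1n : k1 < n by lia.
have k2n : k2 < n by lia.
have dn := pinv_lt p jN.
have Pd := pvalK p jN.
set d := Q j in dn Pd iQ.
pose o1 := Ordinal k1n; pose o2 := Ordinal k2n; pose o3 := Ordinal iN; pose o4 := Ordinal dn.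
have e1 : p o1 = P k1 :> nat by rewrite (pvalE p k1n).
have e2 : p o2 = P k2 :> nat by rewrite (pvalE p k2n).
have e3 : p o3 = P i :> nat by rewrite (pvalE p iN).
have e4 : p o4 = j :> nat by rewrite -Pd (pvalE p dn).
have ne : P k1 != P k2.
  by apply/eqP => /(pval_inj k1n k2n); lia.
case: (ltngtP (P k1) (P k2)) => c; last by rewrite c eqxx in ne.
- apply: (pat4 (t := [:: 1; 2; 4; 3]) _ (o1 := o1) (o2 := o2) (o3 := o3) (o4 := o4)) => //=; try lia.
  move=> [[|[|[|[|a]]]] ha] // [[|[|[|[|b]]]] hb] //=; rewrite ?e1 ?e2 ?e3 ?e4; lia.
- apply: (pat4 (t := [:: 2; 1; 4; 3]) _ (o1 := o1) (o2 := o2) (o3 := o3) (o4 := o4)) => //=; try lia.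
  move=> [[|[|[|[|a]]]] ha] // [[|[|[|[|b]]]] hb] //=; rewrite ?e1 ?e2 ?e3 ?e4; lia.
Qed.
End Sch.


Section Comb.
Variables (n : nat) (p : 'S_n).
Local Notation P := (pval p).
Local Notation Q := (pinv p).

Lemma essP i j : ess p i j ->
  [/\ i < n, j < n, j < P i, i < Q j & ((i.+1 < n /\ P i.+1 <= j) /\ (j.+1 < n /\ Q j.+1 <= i))].
Proof.
case/and3P => /and4P[iN jN jP iQ] d1 d2.
have qn := pinv_lt p jN; have pn := pval_lt p iN.
split => //; split.
- split; first lia.
  rewrite leqNgt; apply/negP => h.
  move: d1; rewrite /diag jN h /=.
  have -> : i.+1 < n by lia.
  move=> /negP h2.
  have e : Q j = i.+1 by lia.
  by move: h; rewrite -e pvalK // ltnn.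
- split; first lia.
  rewrite leqNgt; apply/negP => h.
  move: d2; rewrite /diag iN h /= andbT.
  have -> : j.+1 < n by lia.
  move=> /negP h2.
  have e : P i = j.+1 by lia.
  by move: h; rewrite -e pinvK // ltnn.
Qed.

Lemma ess_diag i j : ess p i j -> diag p i j.
Proof. by case/and3P. Qed.

Lemma rank_wit i j : rank p i j != 0 -> exists k, [/\ k < i, k < n & P k < j].
Proof.
rewrite -lt0n => /card_gt0P [k]; rewrite inE => /andP[ki kj].
by exists k; rewrite pvalO ltn_ord.
Qed.

Hypothesis sch : schroder p.

Lemma rank_diag_le1 i j : diag p i j -> rank p i j <= 1.
Proof.
move=> d; apply: rank_le1 => k1 k2 h1 h2 _ _ h3 h4.
exact: (sch_uniq sch d).
Qed.

Lemma lemG a b a' b' : ess p a b -> diag p a' b' -> a <= a' -> b <= b' -> (a != a') || (b != b') ->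
  exists k, [/\ k < a', P k < b' & (a <= k) || (b <= P k)].
Proof.
move=> e /and4P[a'N b'N b'P a'Q] h1 h2 hne.
case: (essP e) => aN bN bP aQ [[a1N Pa1] [b1N Qb1]].
have qn := pinv_lt p b'N.
case: (ltngtP a a') h1 => // ha _.
-
  have ne : a.+1 != a'.
    apply/eqP => ea; move: b'P; rewrite -ea; lia.
  have ne2 : P a.+1 != b'.
    apply/eqP => eb; move: a'Q; rewrite -eb pinvK //; lia.
  exists a.+1; split => //; [lia | lia | by rewrite leqnSn].
-
  subst a'.
  have hb : b < b' by move: hne; rewrite eqxx /=; lia.
  have q1n := pinv_lt p b1N.
  have Pq := pvalK p b1N.
  have ne : Q b.+1 != a.
    apply/eqP => eq; move: Pq; rewrite eq => Pq; lia.
  have ne2 : b.+1 != b'.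
    apply/eqP => eb; move: a'Q; rewrite -eb; lia.
  exists (Q b.+1); split; [lia | lia | by rewrite Pq leqnSn orbT].
Qed.

Lemma lemH a b a' b' : ess p a b -> diag p a' b' -> a < a' -> b < b' -> False.
Proof.
move=> e d h1 h2; move: (d) => /and4P[a'N b'N b'P a'Q].
case: (essP e) => aN bN bP aQ [[a1N Pa1] [b1N Qb1]].
have qn := pinv_lt p b'N.
have Pq := pvalK p b1N.
have ne : a.+1 != a'.
  apply/eqP => ea; move: b'P; rewrite -ea; lia.
have ne2 : b.+1 != b'.
  apply/eqP => eb; move: a'Q; rewrite -eb; lia.
have := sch_uniq sch d (k1 := a.+1) (k2 := Q b.+1).
rewrite Pq; lia.
Qed.

Lemma ess0_bound i j : ess p i j -> rank p i j = 0 -> i + j + 2 <= n.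
Proof.
move=> e /rank0P Z0.
case: (essP e) => iN jN jP iQ [[a1N Pa1] [b1N Qb1]].
have U : uniq (map P (iota 0 i.+1)).
  rewrite map_inj_in_uniq ?iota_uniq // => x y; rewrite !mem_iota => hx hy.
  apply: pval_inj; lia.
have S : {subset map P (iota 0 i.+1) <= iota j.+1 (n - j.+1)}.
  move=> x /mapP [k]; rewrite mem_iota => /andP[_ hk] ->; rewrite mem_iota.
  have kn : k < n by lia.
  have := pval_lt p kn.
  move=> hl; apply/andP; split; last lia.
  case: (ltngtP k i) => hki; [| lia | by subst k].
  have hz := Z0 k hki kn.
  have : P k != j.
    apply/eqP => ej; move: iQ; rewrite -ej pinvK //; lia.
  lia.
have := uniq_leq_size U S; rewrite size_map !size_iota; lia.
Qed.

Lemma ess1_bound i j : ess p i j -> rank p i j != 0 -> i + j + 1 <= n.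
Proof.
move=> e /rank_wit [k0 [k0i k0n Pk0]].
case: (essP e) => iN jN jP iQ [[a1N Pa1] [b1N Qb1]].
have d := ess_diag e.
have U : uniq (map P (iota 0 i.+1)).
  rewrite map_inj_in_uniq ?iota_uniq // => x y; rewrite !mem_iota => hx hy.
  apply: pval_inj; lia.
have S : {subset map P (iota 0 i.+1) <= P k0 :: iota j.+1 (n - j.+1)}.
  move=> x /mapP [k]; rewrite mem_iota => /andP[_ hk] ->; rewrite in_cons mem_iota.
  have kn : k < n by lia.
  have := pval_lt p kn => hl.
  case: (ltngtP (P k) j) => hj.
  - have ki : k < i by case: (ltngtP k i) => hki; [ | lia | subst k; lia].
    by rewrite (sch_uniq sch d ki k0i hj Pk0) eqxx.
  - by apply/orP; right; lia.
  - by move: iQ; rewrite -hj pinvK //; lia.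
have := uniq_leq_size U S; rewrite /= size_map !size_iota; lia.
Qed.

End Comb.


Section Star.
Variables (n : nat) (p : 'S_n).
Local Notation P := (pval p).
Local Notation Q := (pinv p).
Hypothesis sch : schroder p.

Lemma star_cases i j : ess_star p i j ->
  (ess p i j /\ rank p i j = 0) \/ (ess p i.+1 j.+1 /\ rank p i.+1 j.+1 != 0).
Proof.
case/orP => /andP[e r].
- left; split => //.
  have := rank_diag_le1 sch (ess_diag e); move: r; lia.
- by right; split => //; rewrite (eqP r).
Qed.

Lemma star_bound a b : ess_star p a b -> a + b + 2 <= n.
Proof.
case/star_cases => [[e r]|[e r]].
- exact: ess0_bound e r.
- have := ess1_bound sch e r; lia.
Qed.

Lemma star_anti a b a' b' : ess_star p a b -> ess_star p a' b' -> a <= a' -> b <= b' ->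
  a = a' /\ b = b'.
Proof.
move=> s1 s2 h1 h2.
case: (boolP ((a != a') || (b != b'))) => hne; last first.
  by move: hne; rewrite negb_or !negbK => /andP[/eqP-> /eqP->].
exfalso.
case: (star_cases s1) => [[e1 r1]|[e1 r1]]; case: (star_cases s2) => [[e2 r2]|[e2 r2]].
- have [k [ka kb _]] := lemG e1 (ess_diag e2) h1 h2 hne.
  move/rank0P: r2 => Z2.
  case: (essP e2) => a'N _ _ _ _.
  have := Z2 k ka; lia.
- by apply: (lemH sch e1 (ess_diag e2)); lia.
- move/rank0P: r2 => Z2.
  have [k0 [k0i k0n Pk0]] := rank_wit r1.
  case: (essP e2) => a'N b'N b'P a'Q _.
  case: (ltnP k0 a') => hk.
  + have hz := Z2 k0 hk k0n.
    have : P k0 != b'.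
      apply/eqP => eb; move: a'Q; rewrite -eb pinvK //; lia.
    lia.
  + have ek : k0 = a' by lia.
    subst k0; lia.
- have hne' : (a.+1 != a'.+1) || (b.+1 != b'.+1) by rewrite !eqSS.
  have [k [ka kb kc]] := lemG e1 (ess_diag e2) h1 h2 hne'.
  have [k0 [k0i k0n Pk0]] := rank_wit r1.
  have ee := sch_uniq sch (ess_diag e2) (k1 := k) (k2 := k0).
  have ek : k = k0 by apply: ee; lia.
  by subst k; case/orP: kc; lia.
Qed.

End Star.


Lemma fresh_ex (u : seq nat) (v : nat) : exists w, (v <= w) && (w \notin u).
Proof.
have H : forall x, x \in u -> x <= foldr maxn v u.
  elim: u => //= y u IH x; rewrite in_cons => /orP[/eqP->|/IH h]; lia.
have H2 : v <= foldr maxn v u by elim: u {H} => //= y u IH; lia.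
exists (foldr maxn v u).+1; apply/andP; split; first lia.
by apply/negP => /H; lia.
Qed.

Definition nxt (u : seq nat) (v : nat) : nat := ex_minn (fresh_ex u v).

Lemma nxtP u v : [/\ v <= nxt u v, nxt u v \notin u &
  forall w, v <= w -> w \notin u -> nxt u v <= w].
Proof.
rewrite /nxt; case: ex_minnP => m /andP[h1 h2] h3; split => // w hw hu.
by apply: h3; rewrite hw hu.
Qed.

Section Dom.
Variables (n : nat) (E : nat -> nat -> bool).
Hypothesis Eb : forall a b, E a b -> a + b + 2 <= n.
Hypothesis Ea : forall a b a' b', E a b -> E a' b' -> a <= a' -> b <= b' -> a = a' /\ b = b'.

Definition lam i := \max_(k : 'I_n * 'I_n | E k.1 k.2 && (i <= k.1)) (k.2).+1.

Lemma lam_ge a b i : E a b -> i <= a -> b.+1 <= lam i.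
Proof.
move=> e h; have := Eb e => hb.
have an : a < n by lia.
have bn : b < n by lia.
have := @leq_bigmax_cond _ (fun k : 'I_n * 'I_n => E k.1 k.2 && (i <= k.1)) (fun k : 'I_n * 'I_n => (k.2).+1) (Ordinal an, Ordinal bn); rewrite /= e h; apply => //.
Qed.

Lemma lam_le i m : (forall a b, E a b -> i <= a -> b.+1 <= m) -> lam i <= m.
Proof.
move=> h; apply/bigmax_leqP => k /andP[e hk]; exact: h e hk.
Qed.

Lemma lam_wit i : 0 < lam i -> exists a b, [/\ E a b, i <= a & lam i = b.+1].
Proof.
move=> h.
case: (boolP [exists k : 'I_n * 'I_n, E k.1 k.2 && (i <= k.1) && (lam i == (k.2).+1)]).
  by case/existsP => k /andP[/andP[e hk] /eqP eq]; exists k.1, k.2.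
rewrite negb_exists => /forallP H; exfalso.
have : lam i <= (lam i).-1.
  apply: lam_le => a b e ha.
  have := Eb e => hb.
  have an : a < n by lia.
  have bn : b < n by lia.
  have := H (Ordinal an, Ordinal bn); rewrite /= e ha /= => /eqP ne.
  have := lam_ge e ha; lia.
lia.
Qed.

Lemma lam_mono i i' : i <= i' -> lam i' <= lam i.
Proof. move=> h; apply: lam_le => a b e ha; apply: lam_ge e _; lia. Qed.

Lemma lam_bnd i : i < n -> lam i + i < n.
Proof.
move=> h; have : lam i <= n - i - 1.
  apply: lam_le => a b e ha; have := Eb e; lia.
lia.
Qed.

Lemma lam_big i : n <= i -> lam i = 0.
Proof.
move=> h; apply/eqP; rewrite -leqn0; apply: lam_le => a b e ha; have := Eb e; lia.
Qed.

Lemma lamE i j : E i j = (j.+1 == lam i) && (lam i.+1 <= j).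
Proof.
apply/idP/idP.
- move=> e; apply/andP; split.
  + rewrite eqn_leq (lam_ge e (leqnn i)) /=; apply: lam_le => a b e2 ha.
    case: (leqP b j) => hb //.
    have [ea eb] := Ea e e2 ha (ltnW hb); lia.
  + apply: lam_le => a b e2 ha.
    case: (leqP j b) => hb; last lia.
    have [ea eb] := Ea e e2 (ltnW ha) hb; lia.
- case/andP => /eqP h1 h2.
  have [a [b [e ha hl]]] : exists a b, [/\ E a b, i <= a & lam i = b.+1] by apply: lam_wit; lia.
  have eb : b = j by lia.
  subst b.
  case: (ltngtP i a) ha => // hia _; last by subst a.
  have := lam_ge e hia; lia.
Qed.

Fixpoint build (k : nat) : seq nat :=
  if k is k'.+1 then rcons (build k') (nxt (build k') (lam k')) else [::].

Definition sv i := nxt (build i) (lam i).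

Lemma build_eq i : build i = [seq sv k | k <- iota 0 i].
Proof.
elim: i => // i IH.
transitivity (rcons (build i) (sv i)); first by [].
by rewrite -(addn1 i) iotaD map_cat /= add0n cats1 -IH.
Qed.

Lemma sv_ge i : lam i <= sv i.
Proof. by case: (nxtP (build i) (lam i)). Qed.

Lemma sv_new k i : k < i -> sv k != sv i.
Proof.
move=> h; have hn : sv i \notin build i by case: (nxtP (build i) (lam i)).
rewrite build_eq in hn; apply: contra hn => /eqP <-.
by apply: map_f; rewrite mem_iota; lia.
Qed.

Lemma sv_min i w : lam i <= w -> w < sv i -> exists k, k < i /\ sv k = w.
Proof.
move=> h1 h2; case: (nxtP (build i) (lam i)) => _ _ H.
case: (boolP (w \in build i)) => hw.
  by move: hw; rewrite build_eq => /mapP [k]; rewrite mem_iota => /andP[_ hk] ->; exists k; split; lia.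
have := H w h1 hw; rewrite -/(sv i); lia.
Qed.

Lemma sv_lt i : i < n -> sv i < n.
Proof.
move=> hi; case: (ltnP (sv i) n) => // hs; exfalso.
have U : uniq (iota (lam i) (n - lam i)) by apply: iota_uniq.
have S : {subset iota (lam i) (n - lam i) <= build i}.
  move=> w; rewrite mem_iota => /andP[h1 h2].
  have hw : w < sv i by lia.
  have [k [hk e]] := sv_min h1 hw.
  by rewrite build_eq -e; apply: map_f; rewrite mem_iota; lia.
have := uniq_leq_size U S; rewrite build_eq size_map !size_iota.
have := lam_bnd hi; lia.
Qed.

Lemma sv_inj i i' : sv i = sv i' -> i = i'.
Proof.
move=> e; case: (ltngtP i i') => // h.
- by have := sv_new h; rewrite e eqxx.
- by have := sv_new h; rewrite e eqxx.
Qed.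

Definition sfun (x : 'I_n) : 'I_n := Ordinal (sv_lt (ltn_ord x)).

Lemma sfun_inj : injective sfun.
Proof. move=> x y /(congr1 val) /= /sv_inj e; exact: val_inj. Qed.

Definition sperm : 'S_n := perm sfun_inj.

Lemma sperm_val i : i < n -> pval sperm i = sv i.
Proof. by move=> h; rewrite (pvalE sperm h) permE. Qed.

Lemma diag_sperm i j : diag sperm i j = (i < n) && (j < lam i).
Proof.
apply/idP/idP.
- case/and4P => iN jN jP iQ; rewrite iN /=.
  rewrite sperm_val // in jP.
  have kn := pinv_lt sperm jN.
  have Pk := pvalK sperm jN.
  set k := pinv sperm j in kn Pk iQ.
  rewrite sperm_val // in Pk.
  case: (leqP (lam i) j) => // hl.
  have [k' [hk' e]] := sv_min hl jP.
  have := sv_inj (etrans e (esym Pk)); lia.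
- case/andP => iN hj.
  have := lam_bnd iN => hb.
  have jN : j < n by lia.
  rewrite /diag iN jN sperm_val //=.
  have := sv_ge i => hs.
  rewrite (leq_trans hj hs) /=.
  have kn := pinv_lt sperm jN.
  have Pk := pvalK sperm jN.
  set k := pinv sperm j in kn Pk *.
  rewrite sperm_val // in Pk.
  case: (ltnP i k) => // hk.
  have := lam_mono hk; have := sv_ge k; lia.
Qed.

Lemma rank_sperm i j : diag sperm i j -> rank sperm i j = 0.
Proof.
rewrite diag_sperm => /andP[iN hj]; apply/rank0P => k hk kn.
rewrite sperm_val //; have := sv_ge k; have := lam_mono (ltnW hk); lia.
Qed.

Lemma ess_sperm i j : ess sperm i j = E i j.
Proof.
rewrite /ess !diag_sperm lamE.
case: (ltnP i n) => hi; last by rewrite lam_big //= andbF.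
case: (ltnP i.+1 n) => hi1; last first.
  rewrite (lam_big hi1) /=; apply/idP/idP.
  - case/andP => h1 h2; rewrite eqn_leq h1 /=; lia.
  - case/andP => /eqP <- _; lia.
rewrite /=; apply/idP/idP.
- case/and3P => h1 h2 h3; rewrite eqn_leq h1 /=; lia.
- case/andP => /eqP <- h; apply/and3P; split; lia.
Qed.

Lemma sperm_avoid : avoids sperm [:: 1; 3; 2].
Proof.
move=> [f [mono val]].
pose a0 := f ord0; pose a1 := f (inord 1); pose a2 := f (inord 2).
have h01 : a0 < a1 by apply: mono; rewrite /= inordK.
have h12 : a1 < a2 by apply: mono; rewrite /= !inordK.
have v02 : sperm a0 < sperm a2.
  by have := val ord0 (inord 2); rewrite /= inordK.
have v21 : sperm a2 < sperm a1.
  by have := val (inord 2) (inord 1); rewrite /= !inordK.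
have d : diag sperm a1 (sperm a2).
  rewrite /diag ltn_ord !pvalO v21 /= pinvE.
  have -> : Ordinal (ltn_ord (sperm a2)) = sperm a2 by apply: val_inj.
  by rewrite permK ltn_ord.
have := rank_sperm d; move/rank0P => Z0.
have := Z0 a0 h01 (ltn_ord _); rewrite pvalO; lia.
Qed.

End Dom.

Theorem proposition2p6 (n : nat) (p : 'S_n) :
  schroder p ->
  exists s : 'S_n,
    (forall i j : nat, ess s i j = ess_star p i j) /\
    (forall i j : nat, ess s i j -> rank s i j = 0) /\
    avoids s [:: 1; 3; 2].
Proof.
move=> sch.
exists (sperm (star_bound sch)); split; [|split].
- move=> i j; exact: (ess_sperm (star_bound sch) (star_anti sch)).
- move=> i j /ess_diag; exact: rank_sperm.
- exact: sperm_avoid.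
Qed.
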